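(* Let $(A,\mathcal H)$ be a left Hopf algebroid such that ${}_s\mathcal H$ is $A$-flat. Let $B$ be a right $\mathcal H$-comodule $A^o$-subring of $\mathcal H$ via $t$, with inclusion $\iota$, such that for every $b\in B$, $\beta^{-1}(\iota(b)\otimes_A1)=\sum_i\iota(b_i)\otimes_{A^o}h_i$ for some $\sum_ib_i\otimes_{A^o}h_i\in B\otimes_{A^o}\mathcal H$. Then the map $\mathcal H\otimes_B\mathcal H\to(\mathcal H/\mathcal HB^+)\otimes_A\mathcal H$, $x\otimes_By\mapsto\sum\pi(x_1)\otimes_Ax_2y$ (with $\pi:\mathcal H\to\mathcal H/\mathcal HB^+$ the projection) is well-defined and is an isomorphism.
   Context: $\Bbbk$ is a field. A left bialgebroid $(A,\mathcal H)$: $\Bbbk$-algebras $A,\mathcal H$, algebra maps $s:A\to\mathcal H$, $t:A^o\to\mathcal H$ with commuting images, $A$-bilinear $\Delta:\mathcal H\to\mathcal H\otimes_A\mathcal H$, $\varepsilon:\mathcal H\to A$ (bimodule structure $a\cdot h\cdot b=s(a)t(b)h$; $\mathcal H\otimes_A\mathcal H$ = quotient of $\mathcal H\otimes\mathcal H$ by span of $t(a)x\otimes y-x\otimes s(a)y$), with $(\mathcal H,\Delta,\varepsilon)$ a coassociative counital $A$-coring, $\Delta$ an algebra map into the Takeuchi product $\{\sum x_i\otimes_Ay_i:\sum x_it(a)\otimes_Ay_i=\sum x_i\otimes_Ay_is(a)\ \forall a\}$, $\varepsilon(xs(\varepsilon(y)))=\varepsilon(xy)=\varepsilon(xt(\varepsilon(y)))$,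 $\varepsilon(1)=1$; $\Delta(x)=\sum x_1\otimes_Ax_2$, $\mathcal H^+=\ker\varepsilon$, $B^+=B\cap\mathcal H^+$. Left Hopf algebroid: $\beta:\mathcal H\otimes_{A^o}\mathcal H\to\mathcal H\otimes_A\mathcal H$, $x\otimes_{A^o}y\mapsto\sum x_1\otimes_Ax_2y$ is bijective, where $\mathcal H\otimes_{A^o}\mathcal H$ is the quotient of $\mathcal H\otimes\mathcal H$ by the span of $xt(a)\otimes y-x\otimes t(a)y$. ''${}_s\mathcal H$ is $A$-flat'': flat as left $A$-module via $s$. In $(\mathcal H/\mathcal HB^+)\otimes_A\mathcal H$ the left factor is a right $A$-module via $t$ and $\mathcal H$ a left $A$-module via $s$; $\mathcal H\otimes_B\mathcal H$ uses the regular right and left $B$-actions. Right $\mathcal H$-comodule $A^o$-subring via $t$: subalgebra $B\supseteq t(A)$ with a coassociative counital right $A$-linear coaction $\delta:B\to B\otimes_A\mathcal H$ ($b\cdot a=t(a)b$; $\mathcal H$ left via $s$) such that $(\iota\otimes_A\mathcal H)\delta=\Delta\iota$. *)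

(* Defs.v *)
(* Hopf algebroids over a field k, with balanced tensor
   products encoded by formal finite sums and their universal property. *)
From HB Require Import structures.
From mathcomp Require Import all_boot all_order all_algebra.
Set Implicit Arguments. Unset Strict Implicit. Unset Printing Implicit Defensive.
Import GRing.Theory.
Local Open Scope ring_scope.

Section Tensors.
Variable k : fieldType.

Definition bilinear_on (M N V : lmodType k) (D : pred M) (f : M -> N -> V) : Prop :=
  (forall (c : k) (x x' : M) (y : N), D x -> D x' ->
      f (c *: x + x') y = c *: f x y + f x' y) /\
  (forall (c : k) (x : M) (y y' : N), D x ->
      f x (c *: y + y') = c *: f x y + f x y').

(** Equality in a balanced tensor product (D ⊗ N modulo the balancing
    relations [bal]): two formal sums [u], [v] of elementary tensors are
    equal iff every k-bilinear balanced map takes the same value on them. *)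
Definition tens_eq (M N : lmodType k) (D : pred M)
    (bal : forall V : lmodType k, (M -> N -> V) -> Prop) (u v : seq (M * N)) : Prop :=
  forall (V : lmodType k) (f : M -> N -> V), bilinear_on D f -> bal V f ->
    \sum_(p <- u) f p.1 p.2 = \sum_(p <- v) f p.1 p.2.

Definition trilinear_on (M V : lmodType k) (D : pred M) (f : M -> M -> M -> V) : Prop :=
  (forall (c : k) (x x' y z : M), D x -> D x' ->
      f (c *: x + x') y z = c *: f x y z + f x' y z) /\
  (forall (c : k) (x y y' z : M), D x ->
      f x (c *: y + y') z = c *: f x y z + f x y' z) /\
  (forall (c : k) (x y z z' : M), D x ->
      f x y (c *: z + z') = c *: f x y z + f x y z').

Definition tens3_eq (M : lmodType k) (D : pred M)
    (bal : forall V : lmodType k, (M -> M -> M -> V) -> Prop)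
    (u v : seq (M * M * M)) : Prop :=
  forall (V : lmodType k) (f : M -> M -> M -> V), trilinear_on D f -> bal V f ->
    \sum_(p <- u) f p.1.1 p.1.2 p.2 = \sum_(p <- v) f p.1.1 p.1.2 p.2.

End Tensors.

Section Algebroid.
Variables (k : fieldType) (A H : algType k) (s t : A -> H)
  (Delta : H -> seq (H * H)) (eps : H -> A).

(** H ⊗_A H : relation  t(a)x ⊗ y = x ⊗ s(a)y *)
Definition bal_A (V : lmodType k) (f : H -> H -> V) : Prop :=
  forall (a : A) (x y : H), f (t a * x) y = f x (s a * y).
Definition teqA := tens_eq (@predT H) bal_A.

(** H ⊗_{A^o} H : relation  x t(a) ⊗ y = x ⊗ t(a)y *)
Definition bal_Ao (V : lmodType k) (f : H -> H -> V) : Prop :=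
  forall (a : A) (x y : H), f (x * t a) y = f x (t a * y).
Definition teqAo := tens_eq (@predT H) bal_Ao.

Definition bal_A3 (B : pred H) (V : lmodType k) (f : H -> H -> H -> V) : Prop :=
  (forall (a : A) (x y z : H), B x -> f (t a * x) y z = f x (s a * y) z) /\
  (forall (a : A) (x y z : H), B x -> f x (t a * y) z = f x y (s a * z)).
Definition teqA3 := tens3_eq (@predT H) (bal_A3 predT).

Definition tscale (c : k) (u : seq (H * H)) := [seq (c *: p.1, p.2) | p <- u].
Definition lift_left (D : H -> seq (H * H)) (u : seq (H * H)) : seq (H * H * H) :=
  flatten [seq [seq (q.1, q.2, p.2) | q <- D p.1] | p <- u].
Definition lift_right (u : seq (H * H)) : seq (H * H * H) :=
  flatten [seq [seq (p.1, q.1, q.2) | q <- Delta p.2] | p <- u].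

(** the Galois-type map  x ⊗ y |-> Σ x_1 ⊗ x_2 y  on formal sums
    (used both for β and for the map of the lemma) *)
Definition galois_map (u : seq (H * H)) : seq (H * H) :=
  flatten [seq [seq (q.1, q.2 * p.2) | q <- Delta p.1] | p <- u].

Definition is_left_bialgebroid : Prop :=
  (forall (c : k) (a b : A), s (c *: a + b) = c *: s a + s b) /\
  (forall a b : A, s (a * b) = s a * s b) /\ s 1 = 1 /\
  (forall (c : k) (a b : A), t (c *: a + b) = c *: t a + t b) /\
  (forall a b : A, t (a * b) = t b * t a) /\ t 1 = 1 /\
  (forall a b : A, s a * t b = t b * s a) /\
  (forall (c : k) (x y : H), teqA (Delta (c *: x + y)) (tscale c (Delta x) ++ Delta y)) /\
  (forall (a b : A) (h : H),
      teqA (Delta (s a * t b * h)) [seq (s a * p.1, t b * p.2) | p <- Delta h]) /\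
  (forall (c : k) (x y : H), eps (c *: x + y) = c *: eps x + eps y) /\
  (forall (a b : A) (h : H), eps (s a * t b * h) = a * eps h * b) /\
  (forall x : H, teqA3 (lift_left Delta (Delta x)) (lift_right (Delta x))) /\
  (forall x : H, \sum_(p <- Delta x) s (eps p.1) * p.2 = x) /\
  (forall x : H, \sum_(p <- Delta x) t (eps p.2) * p.1 = x) /\
  (* Delta lands in the Takeuchi product *)
  (forall (a : A) (x : H),
      teqA [seq (p.1 * t a, p.2) | p <- Delta x] [seq (p.1, p.2 * s a) | p <- Delta x]) /\
  (forall x y : H,
      teqA (Delta (x * y)) [seq (p.1 * q.1, p.2 * q.2) | p <- Delta x, q <- Delta y]) /\
  teqA (Delta 1) [:: (1, 1)] /\
  (forall x y : H, eps (x * s (eps y)) = eps (x * y)) /\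
  (forall x y : H, eps (x * y) = eps (x * t (eps y))) /\
  eps 1 = 1.

(** left Hopf algebroid: β : H ⊗_{A^o} H -> H ⊗_A H is (well defined and)
    bijective *)
Definition is_left_Hopf_algebroid : Prop :=
  is_left_bialgebroid /\
  (forall u v : seq (H * H), teqAo u v <-> teqA (galois_map u) (galois_map v)) /\
  (forall w : seq (H * H), exists u, teqA (galois_map u) w).

Definition right_Amod (M : lmodType k) (act : M -> A -> M) : Prop :=
  (forall m : M, act m 1 = m) /\
  (forall (m : M) (a b : A), act (act m a) b = act m (a * b)) /\
  (forall (c : k) (m m' : M) (a : A), act (c *: m + m') a = c *: act m a + act m' a) /\
  (forall (c : k) (m : M) (a a' : A), act m (c *: a + a') = c *: act m a + act m a').

Definition bal_mod (M : lmodType k) (act : M -> A -> M)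
    (V : lmodType k) (f : M -> H -> V) : Prop :=
  forall (a : A) (m : M) (y : H), f (act m a) y = f m (s a * y).

(** _sH is flat: - ⊗_A H preserves injective maps of right A-modules *)
Definition s_flat : Prop :=
  forall (M M' : lmodType k) (act : M -> A -> M) (act' : M' -> A -> M') (g : M -> M'),
    right_Amod act -> right_Amod act' ->
    (forall (c : k) (m m' : M), g (c *: m + m') = c *: g m + g m') ->
    (forall (m : M) (a : A), g (act m a) = act' (g m) a) ->
    injective g ->
    forall u v : seq (M * H),
      tens_eq predT (bal_mod act') [seq (g p.1, p.2) | p <- u] [seq (g p.1, p.2) | p <- v] ->
      tens_eq predT (bal_mod act) u v.

(** B ⊗_A H  (B a right A-module via t, H a left A-module via s) *)
Definition bal_BA (B : {pred H}) (V : lmodType k) (f : H -> H -> V) : Prop :=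
  forall (a : A) (x y : H), x \in B -> f (t a * x) y = f x (s a * y).
Definition teqBA (B : {pred H}) := tens_eq (fun x => x \in B) (bal_BA B).
Definition teqBA3 (B : {pred H}) :=
  tens3_eq (fun x => x \in B) (bal_A3 (fun x => x \in B)).

Definition is_comodule_subring (B : {pred H}) (delta : H -> seq (H * H)) : Prop :=
  (forall (c : k) (x y : H), x \in B -> y \in B -> c *: x + y \in B) /\
  (forall x y : H, x \in B -> y \in B -> x * y \in B) /\
  (forall a : A, t a \in B) /\
  (forall b : H, b \in B -> all (fun p => p.1 \in B) (delta b)) /\
  (forall (c : k) (x y : H), x \in B -> y \in B ->
      teqBA B (delta (c *: x + y)) (tscale c (delta x) ++ delta y)) /\
  (forall (a : A) (b : H), b \in B ->
      teqBA B (delta (t a * b)) [seq (p.1, t a * p.2) | p <- delta b]) /\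
  (forall b : H, b \in B -> teqBA3 B (lift_left delta (delta b)) (lift_right (delta b))) /\
  (forall b : H, b \in B -> \sum_(p <- delta b) t (eps p.2) * p.1 = b) /\
  (forall b : H, b \in B -> teqA (delta b) (Delta b)).

(** (H / H B^+) ⊗_A H : bilinear maps on H × H killing H B^+ in the first
    argument and balanced by  π(t(a)x) ⊗ y = π(x) ⊗ s(a)y *)
Definition bal_Q (B : {pred H}) (V : lmodType k) (f : H -> H -> V) : Prop :=
  bal_A f /\ (forall (h b y : H), b \in B -> eps b = 0 -> f (h * b) y = 0).
Definition teqQ (B : {pred H}) := tens_eq (@predT H) (bal_Q B).

Definition bal_B (B : {pred H}) (V : lmodType k) (f : H -> H -> V) : Prop :=
  forall (b x y : H), b \in B -> f (x * b) y = f x (b * y).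
Definition teqB (B : {pred H}) := tens_eq (@predT H) (bal_B B).

End Algebroid.

(* Main.v *)
Require Import Defs.
From HB Require Import structures.
From mathcomp Require Import all_boot all_order all_algebra.
From Stdlib Require Import ClassicalEpsilon.
Set Implicit Arguments. Unset Strict Implicit. Unset Printing Implicit Defensive.
Import GRing.Theory.
Local Open Scope ring_scope.

Section Bil.
Variables (k : fieldType) (M N V : lmodType k) (f : M -> N -> V).
Hypothesis fb : bilinear_on predT f.

Lemma bilD1 x x' y : f (x + x') y = f x y + f x' y.
Proof. by have := fb.1 1 x x' y isT isT; rewrite !scale1r. Qed.
Lemma bilD2 x y y' : f x (y + y') = f x y + f x y'.
Proof. by have := fb.2 1 x y y' isT; rewrite !scale1r. Qed.
Lemma bil0l y : f 0 y = 0.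
Proof.
have := fb.1 1 0 0 y isT isT; rewrite !scale1r addr0 => h.
by apply: (addrI (f 0 y)); rewrite addr0 -h.
Qed.
Lemma bil0r x : f x 0 = 0.
Proof.
have := fb.2 1 x 0 0 isT; rewrite !scale1r addr0 => h.
by apply: (addrI (f x 0)); rewrite addr0 -h.
Qed.
Lemma bilZ1 c x y : f (c *: x) y = c *: f x y.
Proof. by have := fb.1 c x 0 y isT isT; rewrite !addr0 bil0l addr0. Qed.
Lemma bilZ2 c x y : f x (c *: y) = c *: f x y.
Proof. by have := fb.2 c x y 0 isT; rewrite !addr0 bil0r addr0. Qed.
Lemma bilB1 x x' y : f (x - x') y = f x y - f x' y.
Proof. by rewrite bilD1 -scaleN1r bilZ1 scaleN1r. Qed.
Lemma bilsum2 (I : Type) (r : seq I) x (F : I -> N) :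
  f x (\sum_(i <- r) F i) = \sum_(i <- r) f x (F i).
Proof.
elim: r => [|i r IH]; first by rewrite !big_nil bil0r.
by rewrite !big_cons bilD2 IH.
Qed.
Lemma bilsum1 (I : Type) (r : seq I) y (F : I -> M) :
  f (\sum_(i <- r) F i) y = \sum_(i <- r) f (F i) y.
Proof.
elim: r => [|i r IH]; first by rewrite !big_nil bil0l.
by rewrite !big_cons bilD1 IH.
Qed.
End Bil.

Lemma bil_mk (k : fieldType) (M N V : lmodType k) (f : M -> N -> V) :
  (forall c x x' y, f (c *: x + x') y = c *: f x y + f x' y) ->
  (forall c x y y', f x (c *: y + y') = c *: f x y + f x y') ->
  bilinear_on predT f.
Proof. by move=> h1 h2; split=> *; [apply: h1|apply: h2]. Qed.

Section Main.
Variables (k : fieldType) (A H : algType k) (s t : A -> H)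
  (Delta : H -> seq (H * H)) (eps : H -> A).

Hypothesis sadd : forall (c : k) (a b : A), s (c *: a + b) = c *: s a + s b.
Hypothesis smul : forall a b : A, s (a * b) = s a * s b.
Hypothesis s1 : s 1 = 1.
Hypothesis eadd : forall (c : k) (x y : H), eps (c *: x + y) = c *: eps x + eps y.
Hypothesis eA : forall (a b : A) (h : H), eps (s a * t b * h) = a * eps h * b.
Hypothesis e1 : eps 1 = 1.
Hypothesis cou1 : forall x : H, \sum_(p <- Delta x) s (eps p.1) * p.2 = x.
Hypothesis tak : forall (a : A) (x : H),
  teqA s t [seq (p.1 * t a, p.2) | p <- Delta x] [seq (p.1, p.2 * s a) | p <- Delta x].

Lemma s0 : s 0 = 0.
Proof.
have := sadd 1 0 0; rewrite !scale1r addr0 => h.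
by apply: (addrI (s 0)); rewrite addr0 -h.
Qed.

Lemma epst a : eps (t a) = a.
Proof. by have := eA 1 a 1; rewrite s1 !mul1r mulr1 e1 mul1r. Qed.

Lemma epsB x y : eps (x - y) = eps x - eps y.
Proof. by rewrite addrC -scaleN1r eadd scaleN1r addrC. Qed.

Lemma epsl_bil : bilinear_on predT (fun m n : H => s (eps m) * n).
Proof.
apply: bil_mk => c x x' y /=.
  by rewrite eadd sadd mulrDl scalerAl.
by rewrite mulrDr scalerAr.
Qed.

Lemma epsl_bal : bal_A s t (fun m n : H => s (eps m) * n).
Proof.
move=> a x y /=.
have -> : t a * x = s 1 * t a * x by rewrite s1 mul1r.
by rewrite eA mul1r smul mulrA.
Qed.

Lemma tsum_gal (V : lmodType k) (f : H -> H -> V) u :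
  \sum_(p <- galois_map Delta u) f p.1 p.2 =
  \sum_(p <- u) \sum_(q <- Delta p.1) f q.1 (q.2 * p.2).
Proof.
rewrite /galois_map big_flatten big_map; apply: eq_bigr => p _.
by rewrite big_map.
Qed.

Lemma bal_mulr (V : lmodType k) (f : H -> H -> V) x0 y0 :
  bilinear_on predT f -> bal_A s t f ->
  bilinear_on predT (fun m n => f (m * x0) (n * y0)) /\
  bal_A s t (fun m n => f (m * x0) (n * y0)).
Proof.
move=> fb fbal; split.
  apply: bil_mk => c x x' y /=.
    by rewrite mulrDl -scalerAl (fb.1 _ _ _ _ isT isT).
  by rewrite mulrDl -scalerAl (fb.2 _ _ _ _ isT).
by move=> a x y /=; rewrite -!mulrA fbal.
Qed.

Lemma tak_f (V : lmodType k) (f : H -> H -> V) a x :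
  bilinear_on predT f -> bal_A s t f ->
  \sum_(p <- Delta x) f (p.1 * t a) p.2 = \sum_(p <- Delta x) f p.1 (p.2 * s a).
Proof.
move=> fb fbal; have := tak a x fb fbal.
by rewrite !big_map.
Qed.

Definition Gfun (V : lmodType k) (f : H -> H -> V) x y m n :=
  \sum_(a <- Delta x) f (a.1 * m) (a.2 * (n * y)).

Lemma G_bil (V : lmodType k) (f : H -> H -> V) x y :
  bilinear_on predT f -> bilinear_on predT (Gfun f x y).
Proof.
move=> fb; apply: bil_mk => c m m' n; rewrite /Gfun scaler_sumr -big_split;
  apply: eq_bigr => a _ /=.
  by rewrite mulrDr -scalerAr (fb.1 _ _ _ _ isT isT).
by rewrite mulrDl mulrDr -scalerAl -scalerAr (fb.2 _ _ _ _ isT).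
Qed.

Lemma G_bal (V : lmodType k) (f : H -> H -> V) x y :
  bilinear_on predT f -> bal_A s t f -> bal_A s t (Gfun f x y).
Proof.
move=> fb fbal e m n; rewrite /Gfun.
have [pb pbal] := bal_mulr m (n * y) fb fbal.
have := tak_f e x pb pbal => /= h.
rewrite (eq_bigr (fun a => f (a.1 * t e * m) (a.2 * (n * y)))); last first.
  by move=> a _; rewrite mulrA.
rewrite h; apply: eq_bigr => a _; by rewrite !mulrA.
Qed.

Hypothesis Dlin : forall (c : k) (x y : H),
  teqA s t (Delta (c *: x + y)) (tscale c (Delta x) ++ Delta y).
Hypothesis Dmul : forall x y : H,
  teqA s t (Delta (x * y)) [seq (p.1 * q.1, p.2 * q.2) | p <- Delta x, q <- Delta y].
Variables (B : {pred H}) (delta : H -> seq (H * H)).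
Hypothesis Bcl : forall (c : k) (x y : H), x \in B -> y \in B -> c *: x + y \in B.
Hypothesis tB : forall a : A, t a \in B.
Hypothesis dB : forall b : H, b \in B -> all (fun p => p.1 \in B) (delta b).
Hypothesis dD : forall b : H, b \in B -> teqA s t (delta b) (Delta b).

Lemma rmul_bil (V : lmodType k) (f : H -> H -> V) y :
  bilinear_on predT f -> bal_A s t f ->
  bilinear_on predT (fun m n => f m (n * y)) /\ bal_A s t (fun m n => f m (n * y)).
Proof.
move=> fb fbal; split.
  apply: bil_mk => c x x' z /=; first by rewrite (fb.1 _ _ _ _ isT isT).
  by rewrite mulrDl -scalerAl (fb.2 _ _ _ _ isT).
by move=> a x z /=; rewrite fbal mulrA.
Qed.

Lemma sum_tscale (V : lmodType k) (f : H -> H -> V) c u :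
  bilinear_on predT f ->
  \sum_(p <- tscale c u) f p.1 p.2 = c *: \sum_(p <- u) f p.1 p.2.
Proof.
move=> fb; rewrite big_map scaler_sumr; apply: eq_bigr => p _ /=.
exact: bilZ1.
Qed.

Definition gg (V : lmodType k) (f : H -> H -> V) x y :=
  \sum_(r <- Delta x) f r.1 (r.2 * y).

Lemma gg_bil (V : lmodType k) (f : H -> H -> V) :
  bilinear_on predT f -> bal_A s t f -> bilinear_on predT (gg f).
Proof.
move=> fb fbal; apply: bil_mk => c x x' y; rewrite /gg.
  have [pb pbal] := rmul_bil y fb fbal.
  rewrite (Dlin c x x' pb pbal) big_cat /=; congr (_ + _).
  exact: (sum_tscale c (Delta x) pb).
rewrite scaler_sumr -big_split; apply: eq_bigr => r _ /=.
by rewrite mulrDr -scalerAr (fb.2 _ _ _ _ isT).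
Qed.

Lemma gg_balB (V : lmodType k) (f : H -> H -> V) :
  bilinear_on predT f -> bal_Q s t eps B f -> bal_B B (gg f).
Proof.
move=> fb [fbal fkill] b x y bB; rewrite /gg.
have [pb pbal] := rmul_bil y fb fbal.
rewrite (Dmul x b pb pbal) big_allpairs_dep /= exchange_big /=.
have Gb := G_bil x y fb; have Gbal := G_bal x y fb fbal.
transitivity (\sum_(q <- Delta b) Gfun f x y q.1 q.2).
  by apply: eq_bigr => q _; rewrite /Gfun; apply: eq_bigr => a _; rewrite mulrA.
rewrite -(dD bB Gb Gbal).
have hB := dB bB.
transitivity (\sum_(p <- delta b) Gfun f x y 1 (s (eps p.1) * p.2)).
  apply: eq_big_seq => p pin.
  have p1B : p.1 \in B by move/allP: hB => /(_ p pin).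
  rewrite -Gbal mulr1 /Gfun; apply: eq_bigr => a _.
  have -> : a.1 * p.1 = a.1 * t (eps p.1) + a.1 * (p.1 - t (eps p.1)).
    by rewrite -mulrDr addrC subrK.
  rewrite (bilD1 fb) (fkill a.1 (p.1 - t (eps p.1))) ?addr0 //.
    by rewrite -scaleN1r addrC; apply: Bcl.
  by rewrite epsB epst subrr.
rewrite -(bilsum2 Gb) (dD bB epsl_bil epsl_bal) cou1 /Gfun.
by apply: eq_bigr => a _; rewrite mulr1.
Qed.

Lemma part1 u v : teqB B u v -> teqQ s t eps B (galois_map Delta u) (galois_map Delta v).
Proof.
move=> huv V f fb fQ; rewrite !tsum_gal.
exact: (huv V (gg f) (gg_bil fb fQ.1) (gg_balB fb fQ)).
Qed.

Hypothesis bij : forall u v : seq (H * H),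
  teqAo t u v <-> teqA s t (galois_map Delta u) (galois_map Delta v).
Hypothesis bsurj : forall w : seq (H * H), exists u, teqA s t (galois_map Delta u) w.
Hypothesis hB : forall b : H, b \in B ->
  exists u : seq (H * H), all (fun p => p.1 \in B) u /\
    teqA s t (galois_map Delta u) [:: (b, 1)].

Definition ch (x y : H) : seq (H * H) :=
  proj1_sig (constructive_indefinite_description _ (bsurj [:: (x, y)])).
Lemma chP x y : teqA s t (galois_map Delta (ch x y)) [:: (x, y)].
Proof. exact: (proj2_sig (constructive_indefinite_description _ (bsurj [:: (x, y)]))). Qed.


Lemma lmul_bil (V : lmodType k) (f : H -> H -> V) x0 :
  bilinear_on predT f -> bal_A s t f ->
  bilinear_on predT (fun m n => f (m * x0) n) /\ bal_A s t (fun m n => f (m * x0) n).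
Proof.
move=> fb fbal; split.
  apply: bil_mk => c x x' z /=; last by rewrite (fb.2 _ _ _ _ isT).
  by rewrite mulrDl -scalerAl (fb.1 _ _ _ _ isT isT).
by move=> a x z /=; rewrite -mulrA fbal.
Qed.

Lemma chR (V : lmodType k) (f : H -> H -> V) x z :
  bilinear_on predT f -> bal_A s t f ->
  \sum_(p <- ch x 1) \sum_(q <- Delta p.1) f q.1 (q.2 * (p.2 * z)) = f x z.
Proof.
move=> fb fbal; have [pb pbal] := rmul_bil z fb fbal.
have := chP x 1 pb pbal; rewrite (tsum_gal (fun m n => f m (n * z))) big_seq1 /= mul1r => <-.
by apply: eq_bigr => p _; apply: eq_bigr => q _; rewrite mulrA.
Qed.

Lemma gal_cat u v : galois_map Delta (u ++ v) = galois_map Delta u ++ galois_map Delta v.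
Proof. by rewrite /galois_map map_cat flatten_cat. Qed.

Lemma sum_gal_flatten (V : lmodType k) (f : H -> H -> V) (L : seq (seq (H * H))) :
  \sum_(p <- galois_map Delta (flatten L)) f p.1 p.2 =
  \sum_(l <- L) \sum_(p <- galois_map Delta l) f p.1 p.2.
Proof.
elim: L => [|l L IH]; first by rewrite !big_nil.
by rewrite /= gal_cat big_cat IH big_cons.
Qed.

Section Inj.
Variables (V : lmodType k) (f : H -> H -> V).
Hypothesis fb : bilinear_on predT f.
Hypothesis fbB : bal_B B f.

Lemma fAo : bal_Ao t f.
Proof. by move=> a x y; apply: fbB. Qed.

Lemma teqAo_sum u w : teqAo t u w ->
  \sum_(p <- u) f p.1 p.2 = \sum_(p <- w) f p.1 p.2.
Proof. by move=> h; apply: h fb fAo. Qed.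

Definition FF x y := \sum_(p <- ch x y) f p.1 p.2.

Lemma Fchar w x y : teqA s t (galois_map Delta w) [:: (x, y)] ->
  FF x y = \sum_(p <- w) f p.1 p.2.
Proof.
move=> h; symmetry; apply: teqAo_sum; apply/bij => V' g gb gbal.
by rewrite (h _ _ gb gbal) (chP x y gb gbal).
Qed.

Lemma F_r x z : FF x z = \sum_(p <- ch x 1) f p.1 (p.2 * z).
Proof.
rewrite (@Fchar [seq (p.1, p.2 * z) | p <- ch x 1]) ?big_map //.
move=> V' g gb gbal; rewrite tsum_gal big_map big_seq1 /=.
exact: chR.
Qed.

Lemma F_bil : bilinear_on predT FF.
Proof.
apply: bil_mk => c x x' y.
  rewrite (@Fchar ([seq (p.1, c *: (p.2 * y)) | p <- ch x 1] ++
                   [seq (p.1, p.2 * y) | p <- ch x' 1])).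
    rewrite big_cat !big_map !F_r /= scaler_sumr; congr (_ + _).
    by apply: eq_bigr => p _; rewrite (bilZ2 fb).
  move=> V' g gb gbal; rewrite gal_cat big_cat !tsum_gal !big_map big_seq1 /=.
  rewrite (gb.1 _ _ _ _ isT isT) -(chR x y gb gbal) -(chR x' y gb gbal) scaler_sumr.
  congr (_ + _); apply: eq_bigr => p _; rewrite scaler_sumr; apply: eq_bigr => q _.
  by rewrite -scalerAr (bilZ2 gb).
rewrite !F_r scaler_sumr -big_split; apply: eq_bigr => p _ /=.
by rewrite mulrDr -scalerAr (fb.2 _ _ _ _ isT).
Qed.

Lemma F_bal : bal_A s t FF.
Proof.
move=> a x y; rewrite (@Fchar (ch x (s a * y))) //.
move=> V' g gb gbal; rewrite (chP x (s a * y) gb gbal) !big_seq1 /=.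
by rewrite gbal.
Qed.

Lemma F_kill h b z : b \in B -> eps b = 0 -> FF (h * b) z = 0.
Proof.
move=> bB eb; have [ub [ubB hub]] := hB bB.
have sq : \sum_(q <- ub) q.1 * q.2 = 0.
  have := hub _ _ epsl_bil epsl_bal; rewrite (tsum_gal (fun m n : H => s (eps m) * n)) big_seq1 /= eb s0 mul0r => e.
  apply: (etrans _ e); apply: eq_bigr => q _; rewrite -{1}(cou1 q.1) mulr_suml.
  by apply: eq_bigr => r _; rewrite mulrA.
rewrite (@Fchar [seq (p.1 * q.1, q.2 * (p.2 * z)) | p <- ch h 1, q <- ub]).
  rewrite big_allpairs_dep /= big1 // => p _.
  transitivity (\sum_(q <- ub) f p.1 (q.1 * q.2 * (p.2 * z))).
    apply: eq_big_seq => q qin; rewrite fbB; last by move/allP: ubB => /(_ q qin).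
    by rewrite mulrA.
  by rewrite -(bilsum2 fb) -mulr_suml sq mul0r (bil0r fb).
move=> V' g gb gbal; rewrite tsum_gal big_allpairs_dep big_seq1 /=.
have [lb lbal] := lmul_bil b gb gbal.
rewrite -(chR h z lb lbal); apply: eq_bigr => p _.
have Gb := G_bil p.1 (p.2 * z) gb; have Gbal := G_bal p.1 (p.2 * z) gb gbal.
have := hub _ _ Gb Gbal; rewrite (tsum_gal (Gfun g p.1 (p.2 * z))) big_seq1 /Gfun /= mul1r => e.
apply: (etrans _ e).
apply: eq_bigr => q _.
have [rb rbal] := rmul_bil (q.2 * (p.2 * z)) gb gbal.
rewrite (Dmul p.1 q.1 rb rbal) big_allpairs_dep /= exchange_big /=.
by apply: eq_bigr => c _; apply: eq_bigr => a _; rewrite !mulrA.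
Qed.

Lemma F_gal w : \sum_(p <- galois_map Delta w) FF p.1 p.2 = \sum_(p <- w) f p.1 p.2.
Proof.
set W := flatten [seq ch q.1 q.2 | q <- galois_map Delta w].
have -> : \sum_(p <- galois_map Delta w) FF p.1 p.2 = \sum_(p <- W) f p.1 p.2.
  by rewrite /W [RHS]big_flatten big_map.
apply: teqAo_sum; apply/bij => V' g gb gbal.
rewrite sum_gal_flatten big_map; apply: eq_bigr => q _.
by rewrite (chP q.1 q.2 gb gbal) big_seq1.
Qed.

End Inj.

Lemma part2 u v : teqQ s t eps B (galois_map Delta u) (galois_map Delta v) -> teqB B u v.
Proof.
move=> hQ V f fb fbB; rewrite -(F_gal fb fbB u) -(F_gal fb fbB v).
apply: hQ; first exact: F_bil.
split; first exact: F_bal.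
by move=> h b y bB eb; apply: F_kill.
Qed.

End Main.

Theorem lemma2p12 (k : fieldType) (A H : algType k) (s t : A -> H)
    (Delta : H -> seq (H * H)) (eps : H -> A)
    (B : {pred H}) (delta : H -> seq (H * H)) :
  is_left_Hopf_algebroid s t Delta eps ->
  s_flat s ->
  is_comodule_subring s t Delta eps B delta ->
  (* beta^{-1}(iota(b) ⊗_A 1) lies in the image of B ⊗_{A^o} H *)
  (forall b : H, b \in B ->
     exists u : seq (H * H),
       all (fun p => p.1 \in B) u /\
       teqA s t (galois_map Delta u) [:: (b, 1)]) ->
  (* the map x ⊗_B y |-> Σ π(x_1) ⊗_A x_2 y is well defined ... *)
  (forall u v : seq (H * H),
     teqB B u v -> teqQ s t eps B (galois_map Delta u) (galois_map Delta v)) /\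
  (* ... injective ... *)
  (forall u v : seq (H * H),
     teqQ s t eps B (galois_map Delta u) (galois_map Delta v) -> teqB B u v) /\
  (* ... and surjective *)
  (forall w : seq (H * H), exists u : seq (H * H),
     teqQ s t eps B (galois_map Delta u) w).
Proof.
move=> [[sadd [smul [s1 [tadd [tmul [t1 [st [Dlin [DA [eadd [eA [coass [cou1 [cou2
  [tak [Dmul [D1 [e2a [e2b e1]]]]]]]]]]]]]]]]]]] [bij bsurj]] _
  [Bcl [Bmul [tB [dB [dlin [dA [dcoass [dcou dD]]]]]]]] hB.
split; first by move=> u v; apply: part1; eassumption.
split; first by move=> u v; apply: part2; eassumption.
move=> w; have [u hu] := bsurj w; exists u => V f fb [fbal _].
exact: hu V f fb fbal.
Qed.
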